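(* Let $\sigma\in[0,c]$ and let $\omega_k=(Z_k,E_k,-\lambda_k)$ be given. If for every choice of parameters $(W_k,\theta_k,\beta_k)\in\mathcal{S}(\sigma,A)$ the iteration below produces $\omega_{k+1}=\omega_k$, then $\omega_k=\omega_{k+1}\in\Omega^*$.
   Context: Let $A\in\mathbb{R}^{m\times d}$, $X\in\mathbb{R}^{m\times n}$, and let $f:\mathbb{R}^{d\times n}\to\mathbb{R}$, $g:\mathbb{R}^{m\times n}\to\mathbb{R}$ be convex. Consider the problem $\min_{Z,E} f(Z)+g(E)$ subject to $X=AZ+E$. Triples are written $\omega=(Z,E,-\lambda)$ with $\lambda\in\mathbb{R}^{m\times n}$ a Lagrange multiplier. $\Omega^*$ is the solution set: the set of $\omega^*=(Z^*,E^*,-\lambda^* )$ with $0\in\partial f(Z^* )+A^\top\lambda^*$, $0\in\partial g(E^* )+\lambda^*$, $AZ^*+E^*=X$. $\circ$ is the Hadamard product; $\beta^{-1}$ is the entrywise reciprocal; $\tfrac{\theta}{2}\circ\|M\|_F^2:=\tfrac12\sum_{ij}\theta_{ij}M_{ij}^2$. Iteration (D-LADMM), with parameters $W_k\in\mathbb{R}^{m\times d}$, $\theta_k\in\mathbb{R}^{d\times n}$, $\beta_k\in\mathbb{R}^{m\times n}$: $Z_{k+1}=\arg\min_Z\{ f(Z)+\tfrac{\theta_k}{2}\circ\|Z-Z_k+\theta_k^{-1}\circ W_k^\top(\lambda_k+\beta_k\circ(AZ_k+E_k-X))\|_F^2\}$, $E_{k+1}=\arg\min_E\{g(E)+\tfrac{\beta_k}{2}\circ\|E-X+AZ_{k+1}+\beta_k^{-1}\circ\lambda_k\|_F^2\}$,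 $\lambda_{k+1}=\lambda_k+\beta_k\circ(AZ_{k+1}+E_{k+1}-X)$. $\mathcal{S}(\sigma,A)$ is the set of $(W,\theta,\beta)$ with $\|W-A\|\le\sigma$ (spectral norm), $\theta,\beta$ entrywise positive, and $Z\mapsto\theta\circ Z-W^\top(\beta\circ(AZ))$ positive definite ($\langle\cdot(Z),Z\rangle>0$ for $Z\neq0$). Standing assumption: there is a constant $c$ such that $\mathcal{S}(\sigma,A)\ne\emptyset$ for all $0\le\sigma\le c$. *)

(* Defs.v *)
From HB Require Import structures.
From mathcomp Require Import all_boot all_order all_algebra.
From mathcomp Require Import reals.
Set Implicit Arguments. Unset Strict Implicit. Unset Printing Implicit Defensive.
Import Order.TTheory GRing.Theory Num.Theory.
Local Open Scope ring_scope.

Section Defs.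
Variable R : realType.

Definition frob {p q : nat} (M N : 'M[R]_(p, q)) : R :=
  \sum_(i < p) \sum_(j < q) M i j * N i j.

Definition hada {p q : nat} (M N : 'M[R]_(p, q)) : 'M[R]_(p, q) :=
  \matrix_(i, j) (M i j * N i j).

Definition hinv {p q : nat} (M : 'M[R]_(p, q)) : 'M[R]_(p, q) :=
  \matrix_(i, j) (M i j)^-1.

(* (theta/2) o ||M||_F^2 := 1/2 sum_ij theta_ij M_ij^2 *)
Definition wsq {p q : nat} (th M : 'M[R]_(p, q)) : R :=
  2^-1 * \sum_(i < p) \sum_(j < q) th i j * M i j ^+ 2.

Definition convex_mx {p q : nat} (f : 'M[R]_(p, q) -> R) : Prop :=
  forall (x y : 'M[R]_(p, q)) (t : R), 0 <= t -> t <= 1 ->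
    f (t *: x + (1 - t) *: y) <= t * f x + (1 - t) * f y.

Definition subdiff {p q : nat} (f : 'M[R]_(p, q) -> R) (x G : 'M[R]_(p, q)) : Prop :=
  forall y, f x + frob G (y - x) <= f y.

Definition is_argmin {p q : nat} (phi : 'M[R]_(p, q) -> R) (x : 'M[R]_(p, q)) : Prop :=
  forall y, phi x <= phi y.

Definition spec_norm_le {p q : nat} (M : 'M[R]_(p, q)) (s : R) : Prop :=
  0 <= s /\
  forall v : 'cV[R]_q, frob (M *m v) (M *m v) <= s ^+ 2 * frob v v.

Definition mx_pos {p q : nat} (M : 'M[R]_(p, q)) : Prop :=
  forall i j, 0 < M i j.

Section Alg.
Variables (m d n : nat) (A : 'M[R]_(m, d)) (X : 'M[R]_(m, n)).

Definition S_set (s : R) (W : 'M[R]_(m, d)) (th : 'M[R]_(d, n)) (be : 'M[R]_(m, n)) : Prop :=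
  spec_norm_le (W - A) s /\ mx_pos th /\ mx_pos be /\
  forall Z : 'M[R]_(d, n), Z != 0 ->
    0 < frob (hada th Z - W^T *m hada be (A *m Z)) Z.

Definition Zobj (f : 'M[R]_(d, n) -> R) (W : 'M[R]_(m, d)) (th : 'M[R]_(d, n))
  (be : 'M[R]_(m, n)) (Zk : 'M[R]_(d, n)) (Ek lk : 'M[R]_(m, n)) (Z : 'M[R]_(d, n)) : R :=
  f Z + wsq th (Z - Zk + hada (hinv th) (W^T *m (lk + hada be (A *m Zk + Ek - X)))).

Definition Eobj (g : 'M[R]_(m, n) -> R) (be : 'M[R]_(m, n)) (Z1 : 'M[R]_(d, n))
  (lk : 'M[R]_(m, n)) (E : 'M[R]_(m, n)) : R :=
  g E + wsq be (E - X + A *m Z1 + hada (hinv be) lk).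

Definition dladmm_step (f : 'M[R]_(d, n) -> R) (g : 'M[R]_(m, n) -> R)
  (W : 'M[R]_(m, d)) (th : 'M[R]_(d, n)) (be : 'M[R]_(m, n))
  (Zk : 'M[R]_(d, n)) (Ek lk : 'M[R]_(m, n))
  (Z1 : 'M[R]_(d, n)) (E1 l1 : 'M[R]_(m, n)) : Prop :=
  is_argmin (Zobj f W th be Zk Ek lk) Z1 /\
  is_argmin (Eobj g be Z1 lk) E1 /\
  l1 = lk + hada be (A *m Z1 + E1 - X).

(* (Z, E, -l) belongs to the solution set Omega^* *)
Definition in_Omega_star (f : 'M[R]_(d, n) -> R) (g : 'M[R]_(m, n) -> R)
  (Z : 'M[R]_(d, n)) (E l : 'M[R]_(m, n)) : Prop :=
  subdiff f Z (- (A^T *m l)) /\ subdiff g E (- l) /\ A *m Z + E = X.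

End Alg.
End Defs.

(* Main.v *)
Require Import Defs.
From HB Require Import structures.
From mathcomp Require Import all_boot all_order all_algebra.
From mathcomp Require Import reals.
From mathcomp Require Import lra.
Import Order.TTheory GRing.Theory Num.Theory.
Local Open Scope ring_scope.

Section Aux.
Variable R : realType.

Lemma frob_ge0 p q (M : 'M[R]_(p, q)) : 0 <= frob M M.
Proof. by apply: sumr_ge0 => i _; apply: sumr_ge0 => j _; rewrite -expr2 sqr_ge0. Qed.

Lemma frob_eq0 p q (M : 'M[R]_(p, q)) : frob M M <= 0 -> M = 0.
Proof.
move=> h; have h0 : frob M M = 0 by apply/eqP; rewrite eq_le h frob_ge0.
apply/matrixP => i j; rewrite mxE.
have hi : \sum_(k < q) M i k * M i k = 0.
  move: h0; rewrite /frob => /psumr_eq0P; apply => // k _.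
  by apply: sumr_ge0 => l _; rewrite -expr2 sqr_ge0.
have hij : M i j * M i j = 0.
  by move: hi => /psumr_eq0P; apply => // k _; rewrite -expr2 sqr_ge0.
by move/eqP: hij; rewrite mulf_eq0 orbb => /eqP.
Qed.

Lemma frobZr p q (G M : 'M[R]_(p, q)) t : frob G (t *: M) = t * frob G M.
Proof.
rewrite /frob mulr_sumr; apply: eq_bigr => i _; rewrite mulr_sumr.
by apply: eq_bigr => j _; rewrite mxE mulrCA.
Qed.

Lemma frobNl p q (G M : 'M[R]_(p, q)) : frob (- G) M = - frob G M.
Proof.
rewrite /frob -sumrN; apply: eq_bigr => i _; rewrite -sumrN.
by apply: eq_bigr => j _; rewrite mxE mulNr.
Qed.

Lemma wsqZ p q (th M : 'M[R]_(p, q)) t : wsq th (t *: M) = t ^+ 2 * wsq th M.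
Proof.
rewrite /wsq mulrCA; congr (_ * _); rewrite mulr_sumr; apply: eq_bigr => i _.
rewrite mulr_sumr; apply: eq_bigr => j _; rewrite mxE exprMn mulrCA //.
Qed.

Lemma wsq_ge0 p q (th M : 'M[R]_(p, q)) : mx_pos th -> 0 <= wsq th M.
Proof.
move=> hth; apply: mulr_ge0; first by rewrite invr_ge0.
apply: sumr_ge0 => i _; apply: sumr_ge0 => j _.
by apply: mulr_ge0; [exact: ltW | exact: sqr_ge0].
Qed.

Lemma wsq_expand p q (th M G : 'M[R]_(p, q)) : mx_pos th ->
  wsq th (M + hada (hinv th) G) = wsq th M + frob G M + wsq th (hada (hinv th) G).
Proof.
move=> hth; rewrite /wsq /frob.
have -> : \sum_(i < p) \sum_(j < q) G i j * M i j =
  2^-1 * \sum_(i < p) \sum_(j < q) (2 * (G i j * M i j)).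
  rewrite mulr_sumr; apply: eq_bigr => i _; rewrite mulr_sumr; apply: eq_bigr => j _.
  lra.
rewrite -!mulrDr; congr (_ * _); rewrite -!big_split; apply: eq_bigr => i _.
rewrite -!big_split; apply: eq_bigr => j _ /=.
rewrite !mxE.
have hne : th i j != 0 by rewrite gt_eqF // hth.
set a := th i j; set b := M i j; set c := G i j.
rewrite sqrrD !mulrDr; congr (_ + _ + _).
have e : a * (b * (a^-1 * c)) = c * b.
  by rewrite mulrCA (mulrA a) mulfV // mul1r mulrC.
by rewrite e mulr_natl mulr2n.
Qed.

Lemma key p q (phi : 'M[R]_(p, q) -> R) (hphi : convex_mx phi) (th x G : 'M[R]_(p, q)) :
  mx_pos th ->
  (forall y, phi x + wsq th (x - x + hada (hinv th) G) <=
             phi y + wsq th (y - x + hada (hinv th) G)) ->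
  subdiff phi x (- G).
Proof.
move=> hth H y; rewrite frobNl.
set D := y - x.
set a := phi y - phi x + frob G D.
set b := wsq th D.
have hb : 0 <= b by exact: wsq_ge0.
have ht : forall t, 0 < t -> t <= 1 -> 0 <= a + t * b.
  move=> t t0 t1.
  have h1 := H (x + t *: D).
  rewrite subrr add0r (addrC x) addrK wsq_expand // wsqZ frobZr in h1.
  have hc := hphi y x t (ltW t0) t1.
  have e : t *: y + (1 - t) *: x = t *: D + x.
    by rewrite /D scalerBr scalerBl scale1r addrCA addrC.
  rewrite e in hc.
  have h2 : 0 <= t * (a + t * b).
    rewrite /a /b; move: h1 hc; rewrite /b; set P := phi _; set W0 := wsq _ (hada _ _); move=> h1 hc.
    lra.
  by rewrite pmulr_rge0 in h2.
case: (lerP 0 a) => ha; first by move: ha; rewrite /a; lra.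
have hba : 0 < b - a by lra.
pose t := - a / (b - a).
have t0 : 0 < t by rewrite /t divr_gt0 // oppr_gt0.
have t1 : t <= 1 by rewrite /t ler_pdivrMr // mul1r; lra.
have ef : (b - a) * t = - a by rewrite /t mulrC divfK // gt_eqF.
have h := mulr_ge0 (ltW hba) (ht t t0 t1).
rewrite mulrDr mulrA ef in h.
exfalso; nra.
Qed.
End Aux.

Theorem lemma3 (R : realType) (m d n : nat) (A : 'M[R]_(m, d)) (X : 'M[R]_(m, n))
  (f : 'M[R]_(d, n) -> R) (g : 'M[R]_(m, n) -> R)
  (hf : convex_mx f) (hg : convex_mx g)
  (c : R)
  (hS : forall s : R, 0 <= s -> s <= c ->
          exists (W : 'M[R]_(m, d)) (th : 'M[R]_(d, n)) (be : 'M[R]_(m, n)), S_set A s W th be)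
  (s : R) (hs0 : 0 <= s) (hsc : s <= c)
  (Zk : 'M[R]_(d, n)) (Ek lk : 'M[R]_(m, n))
  (hfix : forall (W : 'M[R]_(m, d)) (th : 'M[R]_(d, n)) (be : 'M[R]_(m, n)), S_set A s W th be ->
            dladmm_step A X f g W th be Zk Ek lk Zk Ek lk) :
  in_Omega_star A X f g Zk Ek lk.
Proof.
have [W [th [be [[_ hspec] [thpos [bepos hpd]]]]]] := hS 0 (lexx 0) (le_trans hs0 hsc).
have eW : W = A.
  apply/eqP; rewrite -subr_eq0; apply/eqP/matrixP => i j.
  have hc := hspec (delta_mx j 0).
  rewrite expr0n /= mul0r -colE in hc.
  have := @frob_eq0 _ _ _ _ hc => /matrixP /(_ i 0).
  by rewrite !mxE.
subst W.
have hSs : S_set A s A th be.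
  split; last by split.
  split => // v; rewrite subrr mul0mx.
  have -> : frob (0 : 'M[R]_(m, 1)) 0 = 0.
    by rewrite /frob big1 // => i _; rewrite big1 // => j _; rewrite mxE mul0r.
  by apply: mulr_ge0; [exact: sqr_ge0 | exact: frob_ge0].
have [hZ [hE hl]] := hfix _ _ _ hSs.
have hr : A *m Zk + Ek - X = 0.
  have : hada be (A *m Zk + Ek - X) = 0.
    by apply: (addrI lk); rewrite addr0 -hl.
  move=> /matrixP hh; apply/matrixP => i j; have := hh i j.
  rewrite !mxE => /eqP; rewrite mulf_eq0 gt_eqF ?bepos //= => /eqP.
  by [].

have hX : A *m Zk + Ek = X by apply/eqP; rewrite -subr_eq0 hr.
have h0 : hada be (0 : 'M[R]_(m, n)) = 0.
  by apply/matrixP => i j; rewrite !mxE mulr0.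
split; [|split] => //.
- have := @key _ _ _ f hf th Zk (A^T *m lk) thpos.
  apply => y; have := hZ y; rewrite /Zobj hr h0 addr0 //.
- have eX : forall E, E - X + A *m Zk = E - Ek.
    by move=> E; rewrite -hX opprD addrA addrAC subrK.
  have := @key _ _ _ g hg be Ek lk bepos.
  apply => y; have := hE y; rewrite /Eobj !eX //.
Qed.
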